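(* Let $G=(V\cup C,E)$ be a protograph and let $\epsilon\in[0,1]$. Suppose the degree-2 subgraph $G_2$ contains a cycle. Then for every edge $e_i$ of that cycle and every $t\ge 0$, the BEC density evolution quantities satisfy $x_t(i)\ge \epsilon^{t+1}$. In particular, for $\epsilon>0$, $x_t(i)$ does not decay double-exponentially in $t$ (i.e., there are no positive constants $\alpha,\beta,K$ with $x_t(i)\le K\exp(-\beta 2^{\alpha t})$ for all large $t$).
   Context: A protograph is a finite bipartite multigraph $G=(V\cup C,E)$ with variable (bit) nodes $V$, check nodes $C$, and ordered edges $E=\{e_1,\dots,e_{|E|}\}$; parallel edges between a variable node and a check node are allowed. For an edge $e$, $v(e)$ and $c(e)$ denote its variable-node and check-node endpoints. The degree of a node is the number of incident edges counted with multiplicity. For an edge $e$, $E_c(e)=\{i: c(e_i)=c(e),\ e_i\neq e\}$ and $E_v(e)=\{i: v(e_i)=v(e),\ e_i\ne e\}$. The degree-2 subgraph $G_2$ of $G$ consists of all degree-2 variable nodes, all edges incident to them, and the check nodes incident to those edges; a cycle in $G_2$ may have length $2$ (two parallel edges between the same variable and check node). Protograph density evolution over BEC$(\epsilon)$: $x_0(i)=\epsilon$ for all $i$, and for $t\ge 0$, $y_{t+1}(j)=1-\prod_{i\in E_c(e_j)}(1-x_t(i))$, $x_{t+1}(i)=\epsilon\prod_{j\in E_v(e_i)}y_{t+1}(j)$ (empty products equal $1$). *)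

(* Defs.v *)
From Stdlib Require Import Reals List Arith Bool.
Import ListNotations.
Open Scope R_scope.
Open Scope bool_scope.

(* Parallel edges are allowed (pv, pc need not be jointly
   injective). *)
Record protograph := Protograph {
  nV : nat; nC : nat; nE : nat;
  pv : nat -> nat;
  pc : nat -> nat;
  pv_lt : forall i, (i < nE)%nat -> (pv i < nV)%nat;
  pc_lt : forall i, (i < nE)%nat -> (pc i < nC)%nat
}.

Definition Ec (G : protograph) (j : nat) : list nat :=
  filter (fun i => Nat.eqb (pc G i) (pc G j) && negb (Nat.eqb i j)) (seq 0 (nE G)).
Definition Ev (G : protograph) (i : nat) : list nat :=
  filter (fun j => Nat.eqb (pv G j) (pv G i) && negb (Nat.eqb j i)) (seq 0 (nE G)).

Definition prodR (l : list nat) (f : nat -> R) : R :=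
  fold_right (fun k acc => f k * acc) 1 l.

Definition vdeg (G : protograph) (v : nat) : nat :=
  length (filter (fun i => Nat.eqb (pv G i) v) (seq 0 (nE G))).

Fixpoint DE_x (G : protograph) (eps : R) (t : nat) : nat -> R :=
  match t with
  | O => fun _ => eps
  | S t' => fun i =>
      eps * prodR (Ev G i)
              (fun j => 1 - prodR (Ec G j) (fun i' => 1 - DE_x G eps t' i'))
  end.

Definition DE_y (G : protograph) (eps : R) (t : nat) (j : nat) : R :=
  1 - prodR (Ec G j) (fun i' => 1 - DE_x G eps t i').

(* A cycle of length 2k (k >= 1) in the degree-2 subgraph G_2, given as the
   edge sequence cyc 0, cyc 1, ..., cyc (2k-1):
   edges cyc(2m), cyc(2m+1) share variable node v_m, edges cyc(2m+1),
   cyc(2m+2 mod 2k) share check node c_m; edges are distinct, the variable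
   nodes v_0..v_{k-1} are distinct, the check nodes c_0..c_{k-1} are
   distinct, and every variable node on the cycle has degree 2 in G
   (so all cycle edges belong to G_2).  k = 1 is a length-2 cycle made of
   two parallel edges. *)
Definition deg2_cycle (G : protograph) (k : nat) (cyc : nat -> nat) : Prop :=
  (1 <= k)%nat /\
  (forall a, (a < 2 * k)%nat -> (cyc a < nE G)%nat) /\
  (forall a b, (a < 2 * k)%nat -> (b < 2 * k)%nat -> cyc a = cyc b -> a = b) /\
  (forall m, (m < k)%nat -> pv G (cyc (2 * m)%nat) = pv G (cyc (2 * m + 1)%nat)) /\
  (forall m, (m < k)%nat ->
      pc G (cyc (2 * m + 1)%nat) = pc G (cyc ((2 * m + 2) mod (2 * k))%nat)) /\
  (forall m n, (m < k)%nat -> (n < k)%nat ->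
      pv G (cyc (2 * m)%nat) = pv G (cyc (2 * n)%nat) -> m = n) /\
  (forall m n, (m < k)%nat -> (n < k)%nat ->
      pc G (cyc (2 * m + 1)%nat) = pc G (cyc (2 * n + 1)%nat) -> m = n) /\
  (forall m, (m < k)%nat -> vdeg G (pv G (cyc (2 * m)%nat)) = 2%nat).

(* Main.v *)
Require Import Defs.
From Stdlib Require Import Reals List Arith Lia Lra.
Import ListNotations.
Open Scope R_scope.

Lemma prodR_bounds (l : list nat) (f : nat -> R) :
  (forall k, 0 <= f k <= 1) -> 0 <= prodR l f <= 1.
Proof.
  intros H; induction l as [|x l IH]; simpl; [lra|].
  destruct (H x); destruct IH; split; [apply Rmult_le_pos; lra|].
  replace 1 with (1*1) by ring; apply Rmult_le_compat; lra.
Qed.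

Lemma prodR_le_mem (l : list nat) (f : nat -> R) i :
  (forall k, 0 <= f k <= 1) -> In i l -> prodR l f <= f i.
Proof.
  intros H; induction l as [|x l IH]; simpl; [tauto|].
  intros [<-|Hi].
  - destruct (H x); destruct (prodR_bounds l f H).
    replace (f x) with (f x * 1) at 2 by ring; apply Rmult_le_compat_l; lra.
  - destruct (H x); destruct (prodR_bounds l f H).
    specialize (IH Hi).
    apply Rle_trans with (1 * prodR l f); [apply Rmult_le_compat_r; lra| lra].
Qed.

Lemma DE_bounds G eps : 0 <= eps <= 1 -> forall t i, 0 <= DE_x G eps t i <= 1.
Proof.
  intros He t; induction t as [|t IH]; intros i; simpl; [lra|].
  assert (Hin : forall j, 0 <= 1 - prodR (Ec G j) (fun i' => 1 - DE_x G eps t i') <= 1).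
  { intros j. assert (H2 : forall k, 0 <= (fun i' => 1 - DE_x G eps t i') k <= 1)
      .
    intros k. cbv beta. specialize (IH k). lra.
    destruct (prodR_bounds (Ec G j) _ H2); lra. }
  destruct (prodR_bounds (Ev G i) _ Hin).
  split; [apply Rmult_le_pos; lra|].
  apply Rle_trans with (1 * prodR (Ev G i) (fun j => 1 - prodR (Ec G j) (fun i' => 1 - DE_x G eps t i'))).
  apply Rmult_le_compat_r; lra. lra.
Qed.

Lemma filter_and (f g : nat -> bool) l :
  @eq (list nat) (filter (fun j => andb (f j) (g j)) l) (filter g (filter f l)).
Proof.
  induction l as [|x l IH]; simpl; auto.
  destruct (f x); simpl; [destruct (g x); simpl; rewrite IH; auto| auto].
Qed.

Lemma Ev_single G e e' :
  (e < nE G)%nat -> (e' < nE G)%nat -> e <> e' -> pv G e = pv G e' ->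
  vdeg G (pv G e) = 2%nat -> Ev G e = [e'].
Proof.
  intros He He' Hne Hp Hd. unfold Ev, vdeg in *.
  rewrite (filter_and (fun j => Nat.eqb (pv G j) (pv G e)) (fun j => negb (Nat.eqb j e))).
  assert (Ine : In e (filter (fun i => Nat.eqb (pv G i) (pv G e)) (seq 0 (nE G)))).
  { apply filter_In; split; [apply in_seq; lia| apply Nat.eqb_refl]. }
  assert (Ine' : In e' (filter (fun i => Nat.eqb (pv G i) (pv G e)) (seq 0 (nE G)))).
  { apply filter_In; split; [apply in_seq; lia| rewrite Hp; apply Nat.eqb_refl]. }
  assert (ND := NoDup_filter (fun i => Nat.eqb (pv G i) (pv G e)) (seq_NoDup (nE G) 0)).
  revert Ine Ine' ND Hd.
  generalize (filter (fun i => Nat.eqb (pv G i) (pv G e)) (seq 0 (nE G))).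
  intros L Ine Ine' ND Hd.
  destruct L as [|x [|y [|z r]]]; simpl in Hd; try discriminate.
  simpl in Ine, Ine'.
  assert (Hxy : x <> y) by (inversion ND as [|? ? Hn]; subst; intro; apply Hn; simpl; auto).
  destruct Ine as [<-|[<-|[]]]; destruct Ine' as [<-|[<-|[]]]; try congruence;
  simpl; repeat match goal with |- context [Nat.eqb ?a ?b] => destruct (Nat.eqb_spec a b) end;
  simpl; congruence.
Qed.

Lemma step G eps t e e' c :
  0 <= eps <= 1 -> Ev G e = [e'] -> In c (Ec G e') ->
  DE_x G eps (S t) e >= eps * DE_x G eps t c.
Proof.
  intros He HEv Hc. cbn [DE_x]. rewrite HEv. unfold prodR at 1. cbn [fold_right].
  fold (prodR (Ec G e') (fun i' => 1 - DE_x G eps t i')).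
  assert (H2 : forall k, 0 <= (fun i' => 1 - DE_x G eps t i') k <= 1)
      by (intros k; destruct (DE_bounds G eps He t k); lra).
  pose proof (prodR_le_mem _ _ c H2 Hc). simpl in H.
  apply Rle_ge. rewrite Rmult_1_r. apply Rmult_le_compat_l; lra.
Qed.

Lemma in_Ec G c b : (c < nE G)%nat -> pc G c = pc G b -> c <> b -> In c (Ec G b).
Proof.
  intros Hc Hp Hn. unfold Ec. apply filter_In; split; [apply in_seq; lia|].
  rewrite Hp, Nat.eqb_refl. rewrite (proj2 (Nat.eqb_neq c b)); auto.
Qed.

Lemma cyc_next G k cyc a : deg2_cycle G k cyc -> (a < 2 * k)%nat ->
  exists b c, (b < 2*k)%nat /\ (c < 2*k)%nat /\ Ev G (cyc a) = [cyc b] /\ In (cyc c) (Ec G (cyc b)).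
Proof.
  intros (Hk & Hlt & Hinj & Hv & Hc & _ & _ & Hd) Ha.
  destruct (Nat.Even_or_Odd a) as [[m ->]|[m ->]].
  - exists (2*m+1)%nat, ((2*m+2) mod (2*k))%nat.
    assert (Hm : (m < k)%nat) by lia.
    assert (Hc2 : ((2*m+2) mod (2*k) < 2*k)%nat) by (apply Nat.mod_upper_bound; lia).
    split; [lia|split; [auto|split]].
    + apply Ev_single; try (apply Hlt; lia).
      intro E; apply Hinj in E; [| try lia | try lia]; lia. apply Hv; lia. apply Hd; lia.
    + apply in_Ec; [apply Hlt; auto| symmetry; apply Hc; auto|].
      intro E; apply Hinj in E; [| try lia | try lia]; auto.
      destruct (Nat.eq_dec (S m) k) as [Em|Em].
      * subst k. replace (2*m+2)%nat with (1 * (2 * S m))%nat in E by lia.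
        rewrite Nat.Div0.mod_mul in E; lia.
      * rewrite Nat.mod_small in E; lia.
  - assert (Hm : (m < k)%nat) by lia.
    destruct m as [|m'].
    + exists 0%nat, (2*(k-1)+1)%nat.
      split; [lia|split; [lia|split]].
      * apply Ev_single; auto; try (apply Hlt; lia).
        intro E; apply Hinj in E; [| try lia | try lia]; lia. symmetry; apply (Hv 0%nat); lia.
        rewrite <- (Hv 0%nat) by lia. apply Hd; lia.
      * apply in_Ec; [apply Hlt; lia| |].
        rewrite (Hc (k-1)%nat) by lia.
        replace (2*(k-1)+2)%nat with (1 * (2 * k))%nat by lia.
        rewrite Nat.Div0.mod_mul by lia. reflexivity.
        intro E; apply Hinj in E; [| try lia | try lia]; lia.
    + exists (2*S m')%nat, (2*m'+1)%nat.
      split; [lia|split; [lia|split]].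
      * apply Ev_single; auto; try (apply Hlt; lia).
        intro E; apply Hinj in E; [| try lia | try lia]; lia. symmetry; apply Hv; lia.
        rewrite <- Hv by lia. apply Hd; lia.
      * apply in_Ec; [apply Hlt; lia| |].
        rewrite (Hc m') by lia.
        rewrite Nat.mod_small by lia. f_equal. f_equal. lia.
        intro E; apply Hinj in E; [| try lia | try lia]; lia.
Qed.

Lemma lower G eps k cyc : 0 <= eps <= 1 -> deg2_cycle G k cyc ->
  forall t a, (a < 2*k)%nat -> DE_x G eps t (cyc a) >= eps ^ (t+1).
Proof.
  intros He Hc t; induction t as [|t IH]; intros a Ha.
  - simpl; lra.
  - destruct (cyc_next G k cyc a Hc Ha) as (b & c & Hb & Hc' & HE & HI).
    pose proof (step G eps t _ _ _ He HE HI).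
    specialize (IH c Hc').
    replace (S t + 1)%nat with (S (t+1)) by lia. simpl.
    apply Rge_trans with (eps * DE_x G eps t (cyc c)); auto.
    apply Rle_ge, Rmult_le_compat_l; lra.
Qed.

Lemma no_dexp (f : nat -> R) (eps : R) :
  0 < eps <= 1 -> (forall t, f t >= eps ^ (t+1)) ->
  ~ (exists alpha beta K : R, 0 < alpha /\ 0 < beta /\ 0 < K /\
            exists T : nat, forall t : nat, (T <= t)%nat ->
              f t <= K * exp (- beta * Rpower 2 (alpha * INR t))).
Proof.
  intros He Hf (alpha & beta & K & Ha & Hb & HK & T & HT).
  set (c := ln eps). set (s := alpha * ln 2).
  assert (Hl2 : 0 < ln 2) by (pose proof ln_lt_2; lra).
  assert (Hs : 0 < s) by (unfold s; apply Rmult_lt_0_compat; lra).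
  set (q := beta * (s * s) / 4).
  assert (Hq : 0 < q) by (unfold q; apply Rmult_lt_0_compat; [apply Rmult_lt_0_compat; nra|lra]).
  destruct (INR_archimed q (Rabs (ln K) + 2 * Rabs c + 1) Hq) as [n Hn].
  set (t := (n + T + 1)%nat).
  assert (Ht1 : 1 <= INR t) by (unfold t; rewrite <- INR_1; apply le_INR; lia).
  assert (Htn : INR n <= INR t) by (unfold t; apply le_INR; lia).
  specialize (HT t ltac:(unfold t; lia)). specialize (Hf t).
  set (y := s * INR t).
  assert (Hy : 0 < y) by (unfold y; nra).
  assert (HP : Rpower 2 (alpha * INR t) = exp (y/2) * exp (y/2)).
  { unfold Rpower. rewrite <- exp_plus. f_equal. unfold y, s. field. }
  assert (Hey : 1 + y/2 < exp (y/2)) by (apply exp_ineq1; lra).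
  assert (HP2 : (y/2)*(y/2) <= Rpower 2 (alpha * INR t)) by (rewrite HP; nra).
  assert (Hpow : eps ^ (t+1) = exp (INR (t+1) * c)).
  { unfold c. rewrite <- ln_pow by lra. rewrite exp_ln; auto. apply pow_lt; lra. }
  assert (HKe : K * exp (- beta * Rpower 2 (alpha * INR t)) =
                exp (ln K - beta * Rpower 2 (alpha * INR t))).
  { unfold Rminus. rewrite exp_plus, exp_ln by auto. f_equal. f_equal. ring. }
  assert (Hle : INR (t+1) * c <= ln K - beta * Rpower 2 (alpha * INR t)).
  { destruct (Rle_lt_dec (INR (t+1) * c) (ln K - beta * Rpower 2 (alpha * INR t))) as [h|h]; auto.
    apply exp_increasing in h. lra. }
  rewrite plus_INR in Hle. simpl INR in Hle.
  assert (Hq2 : q * (INR t * INR t) <= beta * Rpower 2 (alpha * INR t)).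
  { apply Rle_trans with (beta * ((y/2)*(y/2))); [unfold q, y; right; field| apply Rmult_le_compat_l; lra]. }
  pose proof (Rle_abs (ln K)). pose proof (Rabs_pos c). pose proof (Rabs_pos (ln K)).
  pose proof (Rle_abs (- c)). rewrite Rabs_Ropp in H2.
  assert (Hqt : q * INR t > Rabs (ln K) + 2 * Rabs c + 1) by nra.
  assert (q * INR t * INR t >= (Rabs (ln K) + 2 * Rabs c + 1) * INR t) by nra.
  assert (Rabs (ln K) * INR t >= Rabs (ln K)) by nra.
  assert (Rabs c * INR t >= Rabs c) by nra.
  assert (- ((INR t + 1) * c) <= (INR t + 1) * Rabs c).
  { replace (- ((INR t + 1) * c)) with ((INR t + 1) * (- c)) by ring. apply Rmult_le_compat_l; lra. }
  nra.
Qed.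

Theorem mainTheorem2 (G : protograph) (eps : R) (k : nat) (cyc : nat -> nat) :
  0 <= eps <= 1 ->
  deg2_cycle G k cyc ->
  forall a, (a < 2 * k)%nat ->
    (forall t : nat, DE_x G eps t (cyc a) >= eps ^ (t + 1)) /\
    (0 < eps ->
       ~ (exists alpha beta K : R, 0 < alpha /\ 0 < beta /\ 0 < K /\
            exists T : nat, forall t : nat, (T <= t)%nat ->
              DE_x G eps t (cyc a) <= K * exp (- beta * Rpower 2 (alpha * INR t)))).
Proof.
  intros He Hc a Ha. split.
  - intros t; apply (lower G eps k cyc He Hc t a Ha).
  - intros Hp. apply (no_dexp _ eps); [lra|]. intros t; apply (lower G eps k cyc He Hc t a Ha).
Qed.
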